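(* Let $c>0$ and let $f$ be a critical point of the free energy $F$ for one of the four kernels below, i.e. $f(P)=Z^{-1}\exp(-W(P))$ with $Z=\int e^{-W}d\nu$ and $W(P)=\int cG(P,P')f(P')\,d\nu(P')$, so that $$W(P)=c_1\,\bm p\cdot\bm m_1+(c_2Q_1+c_4Q_2):\bm m_1\bm m_1^T+(c_3Q_2+c_4Q_1):\bm m_2\bm m_2^T$$ (with the appropriate coefficients equal to zero). Let $R\in SO(3)$. Then: (a) For the $D_{\infty h}$ kernel $cG=c_2p_{11}^2$: $D_{\infty h}\subseteq R\mathcal J_fR^T$ if and only if $RQ_1R^T$ is diagonal with $(RQ_1R^T)_{22}=(RQ_1R^T)_{33}$. (b) For the $C_{\infty v}$ kernel $cG=c_1p_{11}+c_2p_{11}^2$: $C_{\infty v}\subseteq R\mathcal J_fR^T$ if and only if $RQ_1R^T$ is diagonal with $(RQ_1R^T)_{22}=(RQ_1R^T)_{33}$ and $(R\bm p)_2=(R\bm p)_3=0$. (c) For the $D_{2h}$ kernel $cG=c_2p_{11}^2+c_3p_{22}^2+c_4(p_{12}^2+p_{21}^2)$: $D_{2h}\subseteq R\mathcal J_fR^T$ if and only if both $RQ_1R^T$ and $RQ_2R^T$ are diagonal. (d) For the $C_{2v}$ kernel $cG=c_1p_{11}+c_2p_{11}^2+c_3p_{22}^2+c_4(p_{12}^2+p_{21}^2)$: $C_{2v}\subseteq R\mathcal J_fR^T$ if and only if $RQ_1R^T$ and $RQ_2R^T$ are diagonal and $(R\bm p)_2=(R\bm p)_3=0$.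
   Context: Orientations are $P\in SO(3)$ with body frame $\bm m_i(P)=P\bm e_i$ (columns of $P$); $\nu$ is the normalized Haar measure on $SO(3)$; $p_{ij}=\bm m_i(P)\cdot\bm m_j(P')$. The free energy of a probability density $f$ on $SO(3)$ is $F[f]=\int f\log f\,d\nu+\frac12\iint f(P)cG(P,P')f(P')\,d\nu\,d\nu$. Moments: $\bm p=\langle\bm m_1\rangle$, $Q_1=\langle\bm m_1\bm m_1^T\rangle$, $Q_2=\langle\bm m_2\bm m_2^T\rangle$ with $\langle u\rangle=\int uf\,d\nu$; $A:B=\mathrm{tr}(A^TB)$. Point groups (rotation axis along the first coordinate): with $R_1=\mathrm{diag}(1,-1,-1)$, $R_2=\mathrm{diag}(-1,1,-1)$, $R_3=\mathrm{diag}(-1,-1,1)$, $J_3=\mathrm{diag}(1,1,-1)$, $D_{\infty h}=D_\infty\cup D_\infty J_3$ where $D_\infty=\left\{\begin{pmatrix}\pm1&0&0\\0&\pm\cos\theta&-\sin\theta\\0&\pm\sin\theta&\cos\theta\end{pmatrix}\right\}$ (signs taken together, $\theta\in\mathbb R$); $C_{\infty v}=C_\infty\cup C_\infty J_3$ where $C_\infty=\left\{\begin{pmatrix}1&0&0\\0&\cos\theta&-\sin\theta\\0&\sin\theta&\cos\theta\end{pmatrix}\right\}$; $D_{2h}=\{I,R_1,R_2,R_3\}\cup\{J_3,J_3R_1,J_3R_2,J_3R_3\}$; $C_{2v}=\{I,R_1\}\cup\{J_3,J_3R_1\}$. For each kernel, the molecular symmetry group $\mathcal H$ is the group with the same name ($D_{\infty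 h}$, $C_{\infty v}$, $D_{2h}$, $C_{2v}$ respectively), and $\mathcal H^-$ denotes its elements of determinant $-1$. The phase symmetry group $\mathcal J_f$ is the set of $T\in O(3)$ such that: if $\det T=1$ then $f(TP)=f(P)$ for all $P\in SO(3)$; if $\det T=-1$ then $f(TPJ)=f(P)$ for all $P\in SO(3)$ and all $J\in\mathcal H^-$. *)

(* Defs.v *)
From Stdlib Require Import Reals.
Open Scope R_scope.

Inductive idx : Type := i1 | i2 | i3.
Definition M3 := idx -> idx -> R.
Definition V3 := idx -> R.

Definition sum3 (g : idx -> R) : R := g i1 + g i2 + g i3.
Definition mmul (A B : M3) : M3 := fun i j => sum3 (fun k => A i k * B k j).
Definition tr (A : M3) : M3 := fun i j => A j i.
Definition mvec (A : M3) (v : V3) : V3 := fun i => sum3 (fun k => A i k * v k).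
Definition delta (i j : idx) : R :=
  match i, j with i1, i1 | i2, i2 | i3, i3 => 1 | _, _ => 0 end.
Definition Id3 : M3 := delta.
Definition det (A : M3) : R :=
  A i1 i1 * (A i2 i2 * A i3 i3 - A i2 i3 * A i3 i2)
  - A i1 i2 * (A i2 i1 * A i3 i3 - A i2 i3 * A i3 i1)
  + A i1 i3 * (A i2 i1 * A i3 i2 - A i2 i2 * A i3 i1).

Definition mk3 (a11 a12 a13 a21 a22 a23 a31 a32 a33 : R) : M3 :=
  fun i j => match i, j with
  | i1, i1 => a11 | i1, i2 => a12 | i1, i3 => a13
  | i2, i1 => a21 | i2, i2 => a22 | i2, i3 => a23
  | i3, i1 => a31 | i3, i2 => a32 | i3, i3 => a33 end.

Definition orth (A : M3) : Prop := forall i j, mmul (tr A) A i j = delta i j.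
Definition O3 (A : M3) : Prop := orth A.
Definition SO3 (A : M3) : Prop := orth A /\ det A = 1.

Definition diagonal (A : M3) : Prop := forall i j, i <> j -> A i j = 0.
Definition conjR (R0 A : M3) : M3 := mmul (mmul R0 A) (tr R0).

(* body frame m_i(P) = P e_i (i-th column), p_ij = m_i(P).m_j(P') *)
Definition pij (i j : idx) (P P' : M3) : R := sum3 (fun k => P k i * P' k j).

Definition contSO3 (g : M3 -> R) : Prop :=
  forall P, SO3 P -> forall eps, 0 < eps -> exists dlt, 0 < dlt /\
    forall P', SO3 P' -> (forall i j, Rabs (P i j - P' i j) < dlt) ->
      Rabs (g P - g P') < eps.

(* I is the normalized Haar integral on continuous functions on SO(3):
   a positive, linear, normalized, left- and right-invariant functional on
   C(SO(3)) (these properties characterize the Haar integral uniquely). *)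
Definition haar (I : (M3 -> R) -> R) : Prop :=
  (forall g h, contSO3 g -> contSO3 h -> I (fun P => g P + h P) = I g + I h) /\
  (forall a g, contSO3 g -> I (fun P => a * g P) = a * I g) /\
  (forall g, contSO3 g -> (forall P, SO3 P -> 0 <= g P) -> 0 <= I g) /\
  I (fun _ => 1) = 1 /\
  (forall g T, contSO3 g -> SO3 T -> I (fun P => g (mmul T P)) = I g) /\
  (forall g T, contSO3 g -> SO3 T -> I (fun P => g (mmul P T)) = I g).

Definition Wpot (I : (M3 -> R) -> R) (cG : M3 -> M3 -> R) (f : M3 -> R) (P : M3) : R :=
  I (fun P' => cG P P' * f P').
Definition critical (I : (M3 -> R) -> R) (cG : M3 -> M3 -> R) (f : M3 -> R) : Prop :=
  contSO3 f /\
  forall P, SO3 P ->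
    f P = exp (- Wpot I cG f P) / I (fun P0 => exp (- Wpot I cG f P0)).

Definition pmom (I : (M3 -> R) -> R) (f : M3 -> R) : V3 :=
  fun k => I (fun P => P k i1 * f P).
Definition Qmom (I : (M3 -> R) -> R) (f : M3 -> R) (a : idx) : M3 :=
  fun k l => I (fun P => P k a * P l a * f P).
Definition Q1 I f := Qmom I f i1.
Definition Q2 I f := Qmom I f i2.

Definition ker_Dinfh (c2 : R) : M3 -> M3 -> R :=
  fun P P' => c2 * (pij i1 i1 P P') ^ 2.
Definition ker_Cinfv (c1 c2 : R) : M3 -> M3 -> R :=
  fun P P' => c1 * pij i1 i1 P P' + c2 * (pij i1 i1 P P') ^ 2.
Definition ker_D2h (c2 c3 c4 : R) : M3 -> M3 -> R :=
  fun P P' => c2 * (pij i1 i1 P P') ^ 2 + c3 * (pij i2 i2 P P') ^ 2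
              + c4 * ((pij i1 i2 P P') ^ 2 + (pij i2 i1 P P') ^ 2).
Definition ker_C2v (c1 c2 c3 c4 : R) : M3 -> M3 -> R :=
  fun P P' => c1 * pij i1 i1 P P' + c2 * (pij i1 i1 P P') ^ 2
              + c3 * (pij i2 i2 P P') ^ 2
              + c4 * ((pij i1 i2 P P') ^ 2 + (pij i2 i1 P P') ^ 2).

Definition R1m : M3 := mk3 1 0 0 0 (-1) 0 0 0 (-1).
Definition R2m : M3 := mk3 (-1) 0 0 0 1 0 0 0 (-1).
Definition R3m : M3 := mk3 (-1) 0 0 0 (-1) 0 0 0 1.
Definition J3m : M3 := mk3 1 0 0 0 1 0 0 0 (-1).

Definition Dinf (T : M3) : Prop :=
  exists s th, (s = 1 \/ s = -1) /\
    T = mk3 s 0 0 0 (s * cos th) (- sin th) 0 (s * sin th) (cos th).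
Definition Cinf (T : M3) : Prop :=
  exists th, T = mk3 1 0 0 0 (cos th) (- sin th) 0 (sin th) (cos th).
Definition Dinfh (T : M3) : Prop :=
  Dinf T \/ exists S, Dinf S /\ T = mmul S J3m.
Definition Cinfv (T : M3) : Prop :=
  Cinf T \/ exists S, Cinf S /\ T = mmul S J3m.
Definition D2 (T : M3) : Prop := T = Id3 \/ T = R1m \/ T = R2m \/ T = R3m.
Definition D2h (T : M3) : Prop := D2 T \/ exists S, D2 S /\ T = mmul J3m S.
Definition C2 (T : M3) : Prop := T = Id3 \/ T = R1m.
Definition C2v (T : M3) : Prop := C2 T \/ exists S, C2 S /\ T = mmul J3m S.

(* Phase symmetry group J_f (relative to the molecular group H) *)
Definition Jf (H : M3 -> Prop) (f : M3 -> R) (T : M3) : Prop :=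
  O3 T /\
  (det T = 1 -> forall P, SO3 P -> f (mmul T P) = f P) /\
  (det T = -1 -> forall P J, SO3 P -> H J -> det J = -1 ->
      f (mmul (mmul T P) J) = f P).

(* G ⊆ R J R^T  iff  R^T T R ∈ J for all T ∈ G *)
Definition sub_conj (G : M3 -> Prop) (J : M3 -> Prop) (R0 : M3) : Prop :=
  forall T, G T -> J (mmul (mmul (tr R0) T) R0).

(* Main.v *)
Require Import Defs.
From Stdlib Require Import Reals Lra Psatz FunctionalExtensionality.
Open Scope R_scope.

Lemma cont_const c : contSO3 (fun _ => c).
Proof. intros P _ eps He. exists 1. split; [lra|]. intros.
  replace (c - c) with 0 by ring. rewrite Rabs_R0. lra. Qed.

Lemma cont_entry i j : contSO3 (fun P => P i j).
Proof. intros P _ eps He. exists eps. split; [lra|]. intros P' _ H. apply H. Qed.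

Lemma cont_ext g h : contSO3 g -> (forall P, SO3 P -> g P = h P) -> contSO3 h.
Proof. intros Hg E P HP eps He. destruct (Hg P HP eps He) as [d [Hd H]].
  exists d; split; auto. intros P' HP' Hc. rewrite <- !E by auto. auto. Qed.

Lemma cont_plus g h : contSO3 g -> contSO3 h -> contSO3 (fun P => g P + h P).
Proof. intros Hg Hh P HP eps He.
  destruct (Hg P HP (eps/2)) as [d1 [Hd1 H1]]; [lra|].
  destruct (Hh P HP (eps/2)) as [d2 [Hd2 H2]]; [lra|].
  exists (Rmin d1 d2). split; [apply Rmin_pos; auto|].
  intros P' HP' Hc.
  assert (A1 := H1 P' HP' (fun i j => Rlt_le_trans _ _ _ (Hc i j) (Rmin_l _ _))).
  assert (A2 := H2 P' HP' (fun i j => Rlt_le_trans _ _ _ (Hc i j) (Rmin_r _ _))).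
  replace (g P + h P - (g P' + h P')) with ((g P - g P') + (h P - h P')) by ring.
  eapply Rle_lt_trans; [apply Rabs_triang|]. lra. Qed.

Lemma cont_mul g h : contSO3 g -> contSO3 h -> contSO3 (fun P => g P * h P).
Proof. intros Hg Hh P HP eps He.
  set (a := Rabs (g P)). set (b := Rabs (h P)).
  assert (Ha : 0 <= a) by apply Rabs_pos. assert (Hb : 0 <= b) by apply Rabs_pos.
  destruct (Hg P HP (eps/(2*(b+1)))) as [d1 [Hd1 H1]].
  { apply Rdiv_lt_0_compat; lra. }
  destruct (Hh P HP (Rmin 1 (eps/(2*(a+1))))) as [d2 [Hd2 H2]].
  { apply Rmin_pos; [lra|apply Rdiv_lt_0_compat; lra]. }
  exists (Rmin d1 d2). split; [apply Rmin_pos; auto|].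
  intros P' HP' Hc.
  assert (A1 := H1 P' HP' (fun i j => Rlt_le_trans _ _ _ (Hc i j) (Rmin_l _ _))).
  assert (A2 := H2 P' HP' (fun i j => Rlt_le_trans _ _ _ (Hc i j) (Rmin_r _ _))).
  assert (B1 : Rabs (h P - h P') < 1) by (eapply Rlt_le_trans; [apply A2|apply Rmin_l]).
  assert (B2 : Rabs (h P - h P') < eps/(2*(a+1))) by (eapply Rlt_le_trans; [apply A2|apply Rmin_r]).
  assert (B3 : Rabs (h P') <= b + 1).
  { replace (h P') with (h P - (h P - h P')) by ring.
    eapply Rle_trans; [apply Rabs_triang|]. rewrite Rabs_Ropp. fold b. lra. }
  replace (g P * h P - g P' * h P') with (g P * (h P - h P') + (g P - g P') * h P') by ring.
  eapply Rle_lt_trans; [apply Rabs_triang|]. rewrite !Rabs_mult. fold a.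
  assert (C1 : a * Rabs (h P - h P') <= a * (eps / (2*(a+1)))).
  { apply Rmult_le_compat_l; lra. }
  assert (C2 : a * (eps / (2*(a+1))) < eps/2).
  { apply Rmult_lt_reg_r with (2*(a+1)); [lra|].
    field_simplify; [nra|lra]. }
  assert (C3 : Rabs (g P - g P') * Rabs (h P') <= (eps/(2*(b+1))) * (b+1)).
  { apply Rmult_le_compat; try apply Rabs_pos; lra. }
  assert (C4 : (eps/(2*(b+1))) * (b+1) = eps/2) by (field; lra).
  lra. Qed.

Definition neg (S : M3) : M3 := fun i j => - S i j.
Ltac meq := let i := fresh "i" in let j := fresh "j" in
  extensionality i; extensionality j; destruct i, j;
  unfold conjR, neg, R1m, R2m, R3m, J3m, mmul, tr, sum3, Id3, delta, mk3; simpl; ring.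

Lemma mmul_assoc A B C : mmul (mmul A B) C = mmul A (mmul B C).
Proof. meq. Qed.
Lemma mmul_Id_l A : mmul Id3 A = A. Proof. meq. Qed.
Lemma mmul_Id_r A : mmul A Id3 = A. Proof. meq. Qed.
Lemma tr_mmul A B : tr (mmul A B) = mmul (tr B) (tr A). Proof. meq. Qed.
Lemma tr_tr A : tr (tr A) = A. Proof. reflexivity. Qed.
Lemma det_mul A B : det (mmul A B) = det A * det B.
Proof. unfold det, mmul, sum3. ring. Qed.
Lemma det_tr A : det (tr A) = det A. Proof. unfold det, tr. ring. Qed.

Lemma orth_eq A : orth A <-> mmul (tr A) A = Id3.
Proof. split; intro H.
  - extensionality i; extensionality j. apply H.
  - intros i j. rewrite H. reflexivity. Qed.

Lemma orth_mul A B : orth A -> orth B -> orth (mmul A B).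
Proof. rewrite !orth_eq. intros HA HB. rewrite tr_mmul, mmul_assoc,
  <- (mmul_assoc (tr A)), HA, mmul_Id_l. exact HB. Qed.

Lemma SO3_mul A B : SO3 A -> SO3 B -> SO3 (mmul A B).
Proof. intros [HA DA] [HB DB]. split. apply orth_mul; auto.
  rewrite det_mul, DA, DB. ring. Qed.

Definition adj (A : M3) : M3 := mk3
  (A i2 i2 * A i3 i3 - A i2 i3 * A i3 i2) (A i1 i3 * A i3 i2 - A i1 i2 * A i3 i3) (A i1 i2 * A i2 i3 - A i1 i3 * A i2 i2)
  (A i2 i3 * A i3 i1 - A i2 i1 * A i3 i3) (A i1 i1 * A i3 i3 - A i1 i3 * A i3 i1) (A i1 i3 * A i2 i1 - A i1 i1 * A i2 i3)
  (A i2 i1 * A i3 i2 - A i2 i2 * A i3 i1) (A i1 i2 * A i3 i1 - A i1 i1 * A i3 i2) (A i1 i1 * A i2 i2 - A i1 i2 * A i2 i1).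

Lemma adj_r A : det A = 1 -> mmul A (adj A) = Id3.
Proof. intro D. let i := fresh in let j := fresh in
  extensionality i; extensionality j; destruct i, j;
  unfold mmul, adj, sum3, Id3, delta, mk3; simpl; first [ring | rewrite <- D; unfold det; ring]. Qed.

Lemma SO3_rrt A : SO3 A -> mmul A (tr A) = Id3.
Proof. intros [HO D]. apply orth_eq in HO.
  assert (E : tr A = adj A).
  { rewrite <- (mmul_Id_r (tr A)), <- (adj_r A D), <- mmul_assoc, HO, mmul_Id_l. reflexivity. }
  rewrite E. apply adj_r; auto. Qed.

Lemma SO3_tr A : SO3 A -> SO3 (tr A).
Proof. intro H. split. apply orth_eq. rewrite tr_tr. apply SO3_rrt; auto.
  rewrite det_tr. apply H. Qed.

Lemma orth_bound A : orth A -> forall i j, Rabs (A i j) <= 1.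
Proof. intros H i j. specialize (H j j). unfold mmul, tr, sum3 in H.
  apply Rabs_le. destruct i, j; simpl in H; split; nra. Qed.

Lemma term_bound a d e : Rabs a <= 1 -> Rabs d < e -> Rabs (a*d) < e.
Proof. intros. rewrite Rabs_mult. assert (0 <= Rabs d) by apply Rabs_pos. nra. Qed.

Lemma sum3_bound (g : idx -> R) e : (forall k, Rabs (g k) < e/3) -> Rabs (sum3 g) < e.
Proof. intro H. unfold sum3. eapply Rle_lt_trans; [apply Rabs_triang|].
  eapply Rle_lt_trans; [apply Rplus_le_compat_r; apply Rabs_triang|].
  pose proof (H i1); pose proof (H i2); pose proof (H i3). lra. Qed.

Lemma sum3_minus g h : sum3 g - sum3 h = sum3 (fun k => g k - h k).
Proof. unfold sum3; ring. Qed.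

Lemma cont_compL g L : contSO3 g -> SO3 L -> contSO3 (fun P => g (mmul L P)).
Proof. intros Hg HL P HP eps He.
  destruct (Hg (mmul L P) (SO3_mul _ _ HL HP) eps He) as [d [Hd H]].
  exists (d/3). split; [lra|]. intros P' HP' Hc. apply H. apply SO3_mul; auto.
  intros i j. unfold mmul. rewrite sum3_minus. apply sum3_bound. intro k.
  replace (L i k * P k j - L i k * P' k j) with (L i k * (P k j - P' k j)) by ring.
  apply term_bound. apply orth_bound, HL. apply Hc. Qed.

Lemma cont_compR g L : contSO3 g -> SO3 L -> contSO3 (fun P => g (mmul P L)).
Proof. intros Hg HL P HP eps He.
  destruct (Hg (mmul P L) (SO3_mul _ _ HP HL) eps He) as [d [Hd H]].
  exists (d/3). split; [lra|]. intros P' HP' Hc. apply H. apply SO3_mul; auto.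
  intros i j. unfold mmul. rewrite sum3_minus. apply sum3_bound. intro k.
  replace (P i k * L k j - P' i k * L k j) with (L k j * (P i k - P' i k)) by ring.
  apply term_bound. apply orth_bound, HL. apply Hc. Qed.

Ltac cont_tac := repeat first
  [ assumption | apply cont_plus | apply cont_mul | apply cont_entry | apply cont_const
  | match goal with H : forall _, contSO3 _ |- _ => apply H end
  | match goal with H : forall _ _, contSO3 _ |- _ => apply H end ].

Lemma I_plus I (HI : haar I) g h : contSO3 g -> contSO3 h -> I (fun P => g P + h P) = I g + I h.
Proof. apply HI. Qed.
Lemma I_scal I (HI : haar I) a g : contSO3 g -> I (fun P => a * g P) = a * I g.
Proof. apply HI. Qed.

Lemma I_ext I (HI : haar I) g h : contSO3 g -> (forall P, SO3 P -> g P = h P) -> I g = I h.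
Proof. intros Hg E. assert (Hh : contSO3 h) by (eapply cont_ext; eauto).
  destruct HI as [Hp [Hs [Hpos _]]].
  set (d := fun P => g P + -1 * h P).
  assert (Hd : contSO3 d) by (unfold d; cont_tac).
  assert (Id : I d = I g - I h).
  { unfold d. rewrite Hp; auto. rewrite Hs; auto. ring. cont_tac. }
  assert (D1 : 0 <= I d). { apply Hpos; auto. intros P HP. unfold d. rewrite E; auto. lra. }
  assert (D2 : 0 <= I (fun P => -1 * d P)).
  { apply Hpos. cont_tac. intros P HP. unfold d. rewrite E; auto. lra. }
  rewrite Hs in D2; auto. lra. Qed.

Lemma I_sum3 I (HI : haar I) (F : idx -> M3 -> R) :
  (forall k, contSO3 (F k)) -> I (fun P => sum3 (fun k => F k P)) = sum3 (fun k => I (F k)).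
Proof. intro H. unfold sum3.
  rewrite (I_plus I HI (fun P => F i1 P + F i2 P) (F i3)).
  - rewrite (I_plus I HI (F i1) (F i2)); auto.
  - apply cont_plus; auto.
  - auto. Qed.

Lemma cont_sum3 (F : idx -> M3 -> R) : (forall k, contSO3 (F k)) -> contSO3 (fun P => sum3 (fun k => F k P)).
Proof. intro H. unfold sum3. repeat apply cont_plus; auto. Qed.

Lemma I_sum2 I (HI : haar I) (a : idx -> idx -> R) (G : idx -> idx -> M3 -> R) :
  (forall k l, contSO3 (G k l)) ->
  I (fun P => sum3 (fun k => sum3 (fun l => a k l * G k l P))) =
  sum3 (fun k => sum3 (fun l => a k l * I (G k l))).
Proof. intro H.
  rewrite (I_sum3 I HI (fun k P => sum3 (fun l => a k l * G k l P))).
  2:{ intro k. apply cont_sum3. intro l. cont_tac. }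
  f_equal. extensionality k.
  rewrite (I_sum3 I HI (fun l P => a k l * G k l P)).
  2:{ intro l. cont_tac. }
  f_equal. extensionality l. apply I_scal; auto. Qed.

Lemma I_sum1 I (HI : haar I) (a : idx -> R) (G : idx -> M3 -> R) :
  (forall k, contSO3 (G k)) ->
  I (fun P => sum3 (fun k => a k * G k P)) = sum3 (fun k => a k * I (G k)).
Proof. intro H.
  rewrite (I_sum3 I HI (fun k P => a k * G k P)). 2:{ intro k. cont_tac. }
  f_equal. extensionality k. apply I_scal; auto. Qed.

Ltac cont_tac2 := repeat first
  [ assumption | apply cont_plus | apply cont_mul | apply cont_entry | apply cont_const
  | apply cont_sum3; intro ].

Definition quad (A : M3) (u : V3) := sum3 (fun k => sum3 (fun l => (u k * u l) * A k l)).
Definition col (P : M3) (a : idx) : V3 := fun k => P k a.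
Definition dotv (u v : V3) := sum3 (fun k => u k * v k).

Lemma W_formula I (HI : haar I) f c1 c2 c3 c4 P : contSO3 f ->
  Wpot I (ker_C2v c1 c2 c3 c4) f P =
  c1 * dotv (col P i1) (pmom I f) + c2 * quad (Q1 I f) (col P i1)
  + c3 * quad (Q2 I f) (col P i2)
  + c4 * (quad (Q2 I f) (col P i1) + quad (Q1 I f) (col P i2)).
Proof. intro Hf. unfold Wpot.
  transitivity (I (fun P' =>
     c1 * sum3 (fun k => P k i1 * (P' k i1 * f P'))
   + c2 * sum3 (fun k => sum3 (fun l => (P k i1 * P l i1) * (P' k i1 * P' l i1 * f P')))
   + c3 * sum3 (fun k => sum3 (fun l => (P k i2 * P l i2) * (P' k i2 * P' l i2 * f P')))
   + c4 * (sum3 (fun k => sum3 (fun l => (P k i1 * P l i1) * (P' k i2 * P' l i2 * f P')))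
         + sum3 (fun k => sum3 (fun l => (P k i2 * P l i2) * (P' k i1 * P' l i1 * f P')))))).
  { f_equal; extensionality P'; unfold ker_C2v, pij, sum3; ring. }
  repeat (rewrite (I_plus I HI); [|cont_tac2|cont_tac2]).
  repeat (rewrite (I_scal I HI); [|cont_tac2]).
  repeat (rewrite (I_plus I HI); [|cont_tac2|cont_tac2]).
  rewrite !(I_sum2 I HI) by (intros; cont_tac2).
  rewrite (I_sum1 I HI) by (intros; cont_tac2).
  reflexivity. Qed.

Lemma quad_L A L u e : quad A (fun k => e * mvec L u k) = (e*e) * quad (mmul (mmul (tr L) A) L) u.
Proof. unfold quad, mvec, mmul, tr, sum3. ring. Qed.
Lemma dot_L L u p e : dotv (fun k => e * mvec L u k) p = e * dotv u (mvec (tr L) p).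
Proof. unfold dotv, mvec, tr, sum3. ring. Qed.

Lemma cont_LR g L Rt : contSO3 g -> SO3 L -> SO3 Rt -> contSO3 (fun P => g (mmul (mmul L P) Rt)).
Proof. intros. apply (cont_compL (fun X => g (mmul X Rt))); auto. apply cont_compR; auto. Qed.

Lemma fA I (HI : haar I) c1 c2 c3 c4 f P P' L e1 e2 :
 critical I (ker_C2v c1 c2 c3 c4) f -> SO3 P -> SO3 P' ->
 e1*e1 = 1 -> e2*e2 = 1 ->
 (forall k, P' k i1 = e1 * mvec L (col P i1) k) ->
 mmul (mmul (tr L) (Q1 I f)) L = Q1 I f ->
 (c1 = 0 \/ (e1 = 1 /\ mvec (tr L) (pmom I f) = pmom I f)) ->
 ((c3 = 0 /\ c4 = 0) \/ ((forall k, P' k i2 = e2 * mvec L (col P i2) k) /\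
     mmul (mmul (tr L) (Q2 I f)) L = Q2 I f)) ->
 f P' = f P.
Proof. intros [Hf Hc] HP HP' E1 E2 C1 HQ1 H1 H2.
  rewrite (Hc P' HP'), (Hc P HP).
  assert (W : Wpot I (ker_C2v c1 c2 c3 c4) f P' = Wpot I (ker_C2v c1 c2 c3 c4) f P).
  { rewrite !(W_formula I HI) by auto.
    assert (K1 : col P' i1 = fun k => e1 * mvec L (col P i1) k).
    { extensionality k. apply C1. }
    rewrite K1, !quad_L, HQ1, E1.
    destruct H1 as [H1 | [H1a H1b]].
    - subst c1. destruct H2 as [[-> ->] | [H2a H2b]].
      + ring.
      + assert (K2 : col P' i2 = fun k => e2 * mvec L (col P i2) k).
        { extensionality k. apply H2a. }
        rewrite K2, !quad_L, H2b, HQ1, E2. ring.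
    - rewrite dot_L, H1b, H1a. destruct H2 as [[-> ->] | [H2a H2b]].
      + ring.
      + assert (K2 : col P' i2 = fun k => e2 * mvec L (col P i2) k).
        { extensionality k. apply H2a. }
        rewrite K2, !quad_L, H2b, HQ1, E2. ring. }
  rewrite W. reflexivity. Qed.

Lemma fB I (HI : haar I) f L Rt e1 e2 :
  contSO3 f -> SO3 L -> SO3 Rt ->
  (forall P, SO3 P -> f (mmul (mmul L P) Rt) = f P) ->
  (forall k, Rt k i1 = e1 * delta k i1) -> (forall k, Rt k i2 = e2 * delta k i2) ->
  e1 * e1 = 1 -> e2 * e2 = 1 ->
  conjR L (Q1 I f) = Q1 I f /\ conjR L (Q2 I f) = Q2 I f /\
  (forall k, mvec L (pmom I f) k = e1 * pmom I f k).
Proof. intros Hf HL HRt Hinv C1 C2 E1 E2.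
  assert (Inv : forall g, contSO3 g -> I (fun P => g (mmul (mmul L P) Rt)) = I g).
  { intros g Hg. destruct HI as [_ [_ [_ [_ [HLi HRi]]]]].
    rewrite (HLi (fun X => g (mmul X Rt)) L); [|apply cont_compR; auto|auto].
    apply HRi; auto. }
  assert (Col : forall a e, (forall k, Rt k a = e * delta k a) -> forall P k,
     mmul (mmul L P) Rt k a = e * mmul L P k a).
  { intros a e Ca P k. unfold mmul at 1. unfold sum3. rewrite !Ca.
    destruct a; simpl; ring. }
  assert (Qa : forall a e, (forall k, Rt k a = e * delta k a) -> e * e = 1 ->
     conjR L (Qmom I f a) = Qmom I f a).
  { intros a e Ca Ee. extensionality k; extensionality l.
    transitivity (I (fun P => sum3 (fun n => sum3 (fun m => (L k n * L l m) *
                     (P n a * P m a * f P))))).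
    { rewrite (I_sum2 I HI) by (intros; cont_tac2).
      unfold conjR, mmul, tr, sum3, Qmom. ring. }
    transitivity (I (fun P => (fun X => X k a * X l a * f X) (mmul (mmul L P) Rt))).
    2:{ apply (Inv (fun X => X k a * X l a * f X)). cont_tac2. }
    apply (I_ext I HI). cont_tac2.
    intros P HP. simpl. rewrite !(Col a e Ca), Hinv by auto.
    unfold mmul, sum3. replace (e*e) with 1 by auto. ring_simplify.
    transitivity ((e*e) * ((L k i1 * P i1 a + L k i2 * P i2 a + L k i3 * P i3 a) *
       (L l i1 * P i1 a + L l i2 * P i2 a + L l i3 * P i3 a) * f P)).
    rewrite Ee. ring. ring. }
  split; [apply (Qa i1 e1); auto|]. split; [apply (Qa i2 e2); auto|].
  intro k.
  transitivity (I (fun P => sum3 (fun n => L k n * (P n i1 * f P)))).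
  { rewrite (I_sum1 I HI) by (intros; cont_tac2). reflexivity. }
  transitivity (I (fun P => e1 * (fun X => X k i1 * f X) (mmul (mmul L P) Rt))).
  2:{ rewrite (I_scal I HI (e1) (fun P => (fun X => X k i1 * f X) (mmul (mmul L P) Rt))). rewrite (Inv (fun X => X k i1 * f X)). reflexivity.
      cont_tac2. apply (cont_LR (fun X => X k i1 * f X)); auto. cont_tac2. }
  apply (I_ext I HI). cont_tac2.
  intros P HP. simpl. rewrite (Col i1 e1 C1), Hinv by auto.
  unfold mmul, sum3. transitivity ((e1*e1) * ((L k i1 * P i1 i1 + L k i2 * P i2 i1 + L k i3 * P i3 i1) * f P)).
  rewrite E1; ring. ring. Qed.


Lemma conjR_comp X Y Q : conjR X (conjR Y Q) = conjR (mmul X Y) Q. Proof. meq. Qed.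
Lemma conjR_Id Q : conjR Id3 Q = Q. Proof. meq. Qed.
Lemma mvec_comp X Y v : mvec X (mvec Y v) = mvec (mmul X Y) v.
Proof. extensionality i. unfold mvec, mmul, sum3. ring. Qed.
Lemma mvec_Id v : mvec Id3 v = v.
Proof. extensionality i. destruct i; unfold mvec, Id3, delta, sum3; simpl; ring. Qed.

Lemma RS R0 T : SO3 R0 -> mmul R0 (mmul (mmul (tr R0) T) R0) = mmul T R0.
Proof. intro H. rewrite <- !mmul_assoc, (SO3_rrt _ H), mmul_Id_l. reflexivity. Qed.

Lemma SO3_Id : SO3 Id3.
Proof. split. apply orth_eq. meq. unfold det, Id3, delta; simpl; ring. Qed.

Lemma colJ X J a e : (forall k, J k a = e * delta k a) -> forall k, mmul X J k a = e * X k a.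
Proof. intros C k. unfold mmul at 1, sum3. rewrite !C. destruct a; simpl; ring. Qed.


Lemma det_S R0 T : SO3 R0 -> det (mmul (mmul (tr R0) T) R0) = det T.
Proof. intros [_ D]. rewrite !det_mul, det_tr, D. ring. Qed.

Lemma fwd_rot I (HI : haar I) G f R0 T0 : SO3 R0 -> contSO3 f ->
  sub_conj G (Jf G f) R0 -> G T0 -> det T0 = 1 ->
  conjR T0 (conjR R0 (Q1 I f)) = conjR R0 (Q1 I f) /\
  conjR T0 (conjR R0 (Q2 I f)) = conjR R0 (Q2 I f) /\
  mvec T0 (mvec R0 (pmom I f)) = mvec R0 (pmom I f).
Proof. intros HR Hf Hs HG D.
  set (S := mmul (mmul (tr R0) T0) R0).
  destruct (Hs T0 HG) as [HO [Hrot _]]. fold S in HO, Hrot.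
  assert (DS : det S = 1) by (unfold S; rewrite det_S; auto).
  assert (SS : SO3 S) by (split; auto).
  destruct (fB I HI f S Id3 1 1) as [E1 [E2 E3]]; auto.
  - apply SO3_Id.
  - intros P HP. rewrite mmul_Id_r. apply Hrot; auto.
  - intro k; destruct k; unfold Id3, delta; simpl; ring.
  - intro k; destruct k; unfold Id3, delta; simpl; ring.
  - ring.
  - ring.
  - assert (RT : mmul T0 R0 = mmul R0 S) by (unfold S; rewrite RS; auto).
    split; [|split].
    + rewrite conjR_comp, RT, <- conjR_comp, E1. reflexivity.
    + rewrite conjR_comp, RT, <- conjR_comp, E2. reflexivity.
    + rewrite mvec_comp, RT, <- mvec_comp. f_equal.
      extensionality k. rewrite E3. ring. Qed.

Lemma R3m_SO3 : SO3 R3m.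
Proof. split. apply orth_eq. meq. unfold det, R3m, mk3; simpl; ring. Qed.

Lemma orth_neg S : orth S -> orth (neg S).
Proof. rewrite !orth_eq. intro H. rewrite <- H. meq. Qed.
Lemma det_neg S : det (neg S) = - det S.
Proof. unfold det, neg. ring. Qed.

Lemma fwd_refl I (HI : haar I) G f R0 T0 : SO3 R0 -> contSO3 f ->
  sub_conj G (Jf G f) R0 -> G T0 -> det T0 = -1 -> G J3m ->
  conjR T0 (conjR R0 (Q1 I f)) = conjR R0 (Q1 I f) /\
  conjR T0 (conjR R0 (Q2 I f)) = conjR R0 (Q2 I f).
Proof. intros HR Hf Hs HG D HJ.
  set (S := mmul (mmul (tr R0) T0) R0).
  destruct (Hs T0 HG) as [HO [_ Href]]. fold S in HO, Href.
  assert (DS : det S = -1) by (unfold S; rewrite det_S; auto).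
  assert (SN : SO3 (neg S)).
  { split. apply orth_neg; auto. rewrite det_neg, DS. ring. }
  destruct (fB I HI f (neg S) R3m (-1) (-1)) as [E1 [E2 _]]; auto.
  - apply R3m_SO3.
  - intros P HP. rewrite <- (Href DS P J3m HP HJ).
    + f_equal. meq.
    + unfold det, J3m, mk3; simpl; ring.
  - intro k; destruct k; unfold R3m, mk3, delta; simpl; ring.
  - intro k; destruct k; unfold R3m, mk3, delta; simpl; ring.
  - ring.
  - ring.
  - assert (RT : mmul T0 R0 = mmul R0 S) by (unfold S; rewrite RS; auto).
    assert (NS : forall Q, conjR (neg S) Q = conjR S Q) by (intro; meq).
    rewrite NS in E1, E2. split.
    + rewrite conjR_comp, RT, <- conjR_comp, E1. reflexivity.
    + rewrite conjR_comp, RT, <- conjR_comp, E2. reflexivity. Qed.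

Lemma trS R0 T : tr (mmul (mmul (tr R0) T) R0) = mmul (mmul (tr R0) (tr T)) R0.
Proof. meq. Qed.

Lemma back_Q R0 T Q : SO3 R0 -> conjR (tr T) (conjR R0 Q) = conjR R0 Q ->
  mmul (mmul (tr (mmul (mmul (tr R0) T) R0)) Q) (mmul (mmul (tr R0) T) R0) = Q.
Proof. intros HR H.
  change (conjR (tr (mmul (mmul (tr R0) T) R0)) Q = Q).
  rewrite trS, mmul_assoc, <- conjR_comp, <- conjR_comp, H, conjR_comp.
  destruct HR as [HO _]. apply orth_eq in HO. rewrite HO. apply conjR_Id. Qed.

Lemma back_p R0 T p : SO3 R0 -> mvec (tr T) (mvec R0 p) = mvec R0 p ->
  mvec (tr (mmul (mmul (tr R0) T) R0)) p = p.
Proof. intros HR H.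
  rewrite trS, mmul_assoc, <- mvec_comp, <- mvec_comp, H, mvec_comp.
  destruct HR as [HO _]. apply orth_eq in HO. rewrite HO. apply mvec_Id. Qed.

Lemma back_gen I (HI : haar I) (G : M3 -> Prop) c1 c2 c3 c4 f R0 :
 SO3 R0 -> critical I (ker_C2v c1 c2 c3 c4) f ->
 (forall T, G T -> orth T) ->
 (forall T, G T -> conjR (tr T) (conjR R0 (Q1 I f)) = conjR R0 (Q1 I f)) ->
 (c1 = 0 \/ ((forall T, G T -> mvec (tr T) (mvec R0 (pmom I f)) = mvec R0 (pmom I f)) /\
             forall J, G J -> forall k, J k i1 = 1 * delta k i1)) ->
 ((c3 = 0 /\ c4 = 0) \/
   ((forall T, G T -> conjR (tr T) (conjR R0 (Q2 I f)) = conjR R0 (Q2 I f)) /\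
    forall J, G J -> exists e, e * e = 1 /\ forall k, J k i2 = e * delta k i2)) ->
 (forall J, G J -> exists e, e * e = 1 /\ forall k, J k i1 = e * delta k i1) ->
 sub_conj G (Jf G f) R0.
Proof. intros HR Hc Horth HA1 Hp HA2 Hcol T HT.
  set (S := mmul (mmul (tr R0) T) R0).
  assert (OS : orth S).
  { unfold S. apply orth_mul; [apply orth_mul|]. apply (SO3_tr _ HR). auto. apply HR. }
  assert (Q1S : mmul (mmul (tr S) (Q1 I f)) S = Q1 I f) by (apply back_Q; auto).
  split; [exact OS|]. split.
  - intros DS P HP. assert (SS : SO3 S) by (split; auto).
    apply (fA I HI c1 c2 c3 c4 f P (mmul S P) S 1 1); auto.
    + apply SO3_mul; auto.
    + ring.
    + ring.
    + intro k. unfold mmul, mvec, col. ring.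
    + destruct Hp as [Hp|[Hp _]]; [left; auto|right; split; auto].
      apply back_p; auto.
    + destruct HA2 as [HA2|[HA2 _]]; [left; auto|right; split].
      * intro k. unfold mmul, mvec, col. ring.
      * apply back_Q; auto.
  - intros DS P J HP HJ DJ.
    assert (SS : orth (mmul (mmul S P) J)).
    { apply orth_mul; [apply orth_mul|]; auto. apply HP. }
    assert (SPJ : SO3 (mmul (mmul S P) J)).
    { split; auto. rewrite !det_mul, DS, DJ. destruct HP as [_ ->]. ring. }
    destruct (Hcol J HJ) as [e1 [E1 C1]].
    assert (Hp' : c1 = 0 \/ (1 = 1 /\ mvec (tr S) (pmom I f) = pmom I f)).
    { destruct Hp as [Hp|[Hp _]]; [left; auto|right; split; auto]. apply back_p; auto. }
    destruct Hp as [Hp0|[_ HJ1]].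
    + destruct HA2 as [HA2|[HA2 Hc2]].
      * apply (fA I HI c1 c2 c3 c4 f P _ S e1 1); auto.
        -- ring.
        -- intro k. rewrite (colJ _ J i1 e1 C1). reflexivity.
      * destruct (Hc2 J HJ) as [e2 [E2 C2]].
        apply (fA I HI c1 c2 c3 c4 f P _ S e1 e2); auto.
        -- intro k. rewrite (colJ _ J i1 e1 C1). reflexivity.
        -- right. split. intro k. rewrite (colJ _ J i2 e2 C2). reflexivity.
           apply back_Q; auto.
    + destruct HA2 as [HA2|[HA2 Hc2]].
      * apply (fA I HI c1 c2 c3 c4 f P _ S 1 1); auto.
        -- ring.
        -- ring.
        -- intro k. rewrite (colJ _ J i1 1 (HJ1 J HJ)). reflexivity.
      * destruct (Hc2 J HJ) as [e2 [E2 C2]].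
        apply (fA I HI c1 c2 c3 c4 f P _ S 1 e2); auto.
        -- ring.
        -- intro k. rewrite (colJ _ J i1 1 (HJ1 J HJ)). reflexivity.
        -- right. split. intro k. rewrite (colJ _ J i2 e2 C2). reflexivity.
           apply back_Q; auto.
Qed.

Ltac trig_fin s c sn Hs Hc :=
  ring_simplify;
  try (assert (S2 : s ^ 2 = 1) by (rewrite <- Hs; ring); rewrite ?S2);
  try (assert (C2 : c ^ 2 = 1 - sn ^ 2) by (rewrite <- Hc; ring); rewrite ?C2);
  ring.

Lemma rot_conj s c sn a b : s*s=1 -> c*c+sn*sn=1 ->
  conjR (tr (mk3 s 0 0 0 (s*c) (-sn) 0 (s*sn) c)) (mk3 a 0 0 0 b 0 0 0 b) = mk3 a 0 0 0 b 0 0 0 b.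
Proof. intros Hs Hc.
  extensionality i; extensionality j; destruct i, j;
  unfold conjR, mmul, tr, sum3, mk3; simpl; trig_fin s c sn Hs Hc. Qed.

Lemma rot_orth s c sn : s*s=1 -> c*c+sn*sn=1 -> orth (mk3 s 0 0 0 (s*c) (-sn) 0 (s*sn) c).
Proof. intros Hs Hc i j. destruct i, j;
  unfold mmul, tr, sum3, mk3, delta; simpl; trig_fin s c sn Hs Hc. Qed.

Lemma Dinf_form T : Dinf T -> exists s c sn, s*s=1 /\ c*c+sn*sn=1 /\
  T = mk3 s 0 0 0 (s*c) (-sn) 0 (s*sn) c.
Proof. intros [s [th [Hs ->]]]. exists s, (cos th), (sin th). split; [|split].
  destruct Hs as [->| ->]; ring. pose proof (sin2_cos2 th) as HH; unfold Rsqr in HH; lra. reflexivity. Qed.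

Lemma Cinf_form T : Cinf T -> exists c sn, c*c+sn*sn=1 /\
  T = mk3 1 0 0 0 (1*c) (-sn) 0 (1*sn) c.
Proof. intros [th ->]. exists (cos th), (sin th). split.
  pose proof (sin2_cos2 th) as HH; unfold Rsqr in HH; lra. meq. Qed.

Lemma conjR_trmul X Y A : conjR (tr (mmul X Y)) A = conjR (tr Y) (conjR (tr X) A).
Proof. rewrite tr_mmul, conjR_comp. reflexivity. Qed.
Lemma mvec_trmul X Y v : mvec (tr (mmul X Y)) v = mvec (tr Y) (mvec (tr X) v).
Proof. rewrite tr_mmul, mvec_comp. reflexivity. Qed.

Definition dg d1 d2 d3 := mk3 d1 0 0 0 d2 0 0 0 d3.

Lemma dg_orth d1 d2 d3 : d1*d1=1 -> d2*d2=1 -> d3*d3=1 -> orth (dg d1 d2 d3).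
Proof. intros H1 H2 H3 i j. destruct i, j; unfold dg, mmul, tr, sum3, mk3, delta; simpl;
  first [ring | lra]. Qed.
Lemma dg_conj d1 d2 d3 a b c : d1*d1=1 -> d2*d2=1 -> d3*d3=1 ->
  conjR (tr (dg d1 d2 d3)) (dg a b c) = dg a b c.
Proof. intros H1 H2 H3. extensionality i; extensionality j; destruct i, j;
  unfold conjR, dg, mmul, tr, sum3, mk3; simpl; ring_simplify;
  first [ring | rewrite H1; ring | rewrite H2; ring | rewrite H3; ring |
         replace (d1^2) with 1 by (rewrite <- H1; ring); ring |
         replace (d2^2) with 1 by (rewrite <- H2; ring); ring |
         replace (d3^2) with 1 by (rewrite <- H3; ring); ring]. Qed.
Lemma dg_col1 d1 d2 d3 k : dg d1 d2 d3 k i1 = d1 * delta k i1.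
Proof. destruct k; unfold dg, mk3, delta; simpl; ring. Qed.
Lemma dg_col2 d1 d2 d3 k : dg d1 d2 d3 k i2 = d2 * delta k i2.
Proof. destruct k; unfold dg, mk3, delta; simpl; ring. Qed.
Lemma dg_vec d2 d3 (q : V3) : q i2 = 0 -> q i3 = 0 -> mvec (tr (dg 1 d2 d3)) q = q.
Proof. intros H2 H3. extensionality k; destruct k; unfold mvec, dg, tr, mk3, sum3; simpl;
  rewrite ?H2, ?H3; ring. Qed.

Lemma J3_dg : J3m = dg 1 1 (-1). Proof. reflexivity. Qed.

Lemma diagA A : diagonal A -> A = dg (A i1 i1) (A i2 i2) (A i3 i3).
Proof. intro H. extensionality i; extensionality j; destruct i, j; unfold dg, mk3; simpl;
  try reflexivity; apply H; discriminate. Qed.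

Lemma Dinfh_facts T : Dinfh T -> orth T /\
  (forall a b, conjR (tr T) (dg a b b) = dg a b b) /\
  (exists e, e*e=1 /\ forall k, T k i1 = e * delta k i1).
Proof.
  assert (Hd : forall S, Dinf S -> orth S /\ (forall a b, conjR (tr S) (dg a b b) = dg a b b) /\
     (exists e, e*e=1 /\ forall k, S k i1 = e * delta k i1)).
  { intros S HS. destruct (Dinf_form S HS) as [s [c [sn [Hs [Hc ->]]]]].
    split; [apply rot_orth; auto|split].
    - intros a b. apply rot_conj; auto.
    - exists s. split; auto. intro k; destruct k; unfold mk3, delta; simpl; ring. }
  intros [HT | [S [HS ->]]]. apply Hd; auto.
  destruct (Hd S HS) as [O1 [C1 [e [E1 K1]]]]. split; [|split].
  - apply orth_mul; auto. rewrite J3_dg. apply dg_orth; ring.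
  - intros a b. rewrite conjR_trmul, C1, J3_dg. apply dg_conj; ring.
  - exists e. split; auto. intro k. rewrite (colJ S J3m i1 1).
    rewrite K1; ring. intro m; destruct m; unfold J3m, mk3, delta; simpl; ring.
Qed.

Lemma Cinfv_facts T : Cinfv T -> Dinfh T /\
  (forall q : V3, q i2 = 0 -> q i3 = 0 -> mvec (tr T) q = q) /\
  (forall k, T k i1 = 1 * delta k i1).
Proof.
  assert (Hd : forall S, Cinf S -> Dinf S /\ (forall q : V3, q i2 = 0 -> q i3 = 0 -> mvec (tr S) q = q) /\
     (forall k, S k i1 = 1 * delta k i1)).
  { intros S HS. destruct HS as [th ->]. split; [|split].
    - exists 1, th. split; [left; reflexivity|]. meq.
    - intros q H2 H3. extensionality k; destruct k; unfold mvec, tr, mk3, sum3; simpl;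
      rewrite ?H2, ?H3; ring.
    - intro k; destruct k; unfold mk3, delta; simpl; ring. }
  intros [HT | [S [HS ->]]].
  - destruct (Hd T HT) as [A1 [A2 A3]]. split; [left; auto|split; auto].
  - destruct (Hd S HS) as [A1 [A2 A3]]. split; [right; exists S; auto|split].
    + intros q H2 H3. rewrite mvec_trmul, A2, J3_dg by auto. apply dg_vec; auto.
    + intro k. rewrite (colJ S J3m i1 1). rewrite A3; ring.
      intro m; destruct m; unfold J3m, mk3, delta; simpl; ring.
Qed.

Lemma D2h_form T : D2h T -> exists d1 d2 d3, d1*d1=1 /\ d2*d2=1 /\ d3*d3=1 /\ T = dg d1 d2 d3.
Proof. intros [H | [S [H ->]]];
  repeat (destruct H as [-> | H]); try (rewrite H);
  [ exists 1, 1, 1 | exists 1, (-1), (-1) | exists (-1), 1, (-1) | exists (-1), (-1), 1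
  | exists 1, 1, (-1) | exists 1, (-1), 1 | exists (-1), 1, 1 | exists (-1), (-1), (-1) ];
  (split; [ring|split; [ring|split; [ring|meq]]]). Qed.

Lemma C2v_form T : C2v T -> exists d2 d3, d2*d2=1 /\ d3*d3=1 /\ T = dg 1 d2 d3.
Proof. intros [H | [S [H ->]]];
  repeat (destruct H as [-> | H]); try (rewrite H);
  [ exists 1, 1 | exists (-1), (-1) | exists 1, (-1) | exists (-1), 1 ];
  (split; [ring|split; [ring|meq]]). Qed.

Definition Rt90 := mk3 1 0 0 0 0 (-1) 0 1 0.

Ltac ext_entry H i j := let E := fresh "E" in
  assert (E := f_equal (fun M => M i j) H); unfold conjR, mmul, tr, sum3, mk3, R1m, R2m, R3m, J3m, Rt90 in E;
  simpl in E.

Lemma fw_R1 A : conjR R1m A = A -> (forall i j, A i j = A j i) -> A i1 i2 = 0 /\ A i1 i3 = 0.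
Proof. intros H S. ext_entry H i1 i2. ext_entry H i1 i3. split; lra. Qed.
Lemma fw_R2 A : conjR R2m A = A -> (forall i j, A i j = A j i) -> A i1 i2 = 0 /\ A i2 i3 = 0.
Proof. intros H S. ext_entry H i1 i2. ext_entry H i2 i3. split; lra. Qed.
Lemma fw_R3 A : conjR R3m A = A -> (forall i j, A i j = A j i) -> A i1 i3 = 0 /\ A i2 i3 = 0.
Proof. intros H S. ext_entry H i1 i3. ext_entry H i2 i3. split; lra. Qed.
Lemma fw_J3 A : conjR J3m A = A -> (forall i j, A i j = A j i) -> A i1 i3 = 0 /\ A i2 i3 = 0.
Proof. intros H S. ext_entry H i1 i3. ext_entry H i2 i3. split; lra. Qed.
Lemma fw_rot A : conjR Rt90 A = A -> (forall i j, A i j = A j i) -> A i2 i2 = A i3 i3 /\ A i2 i3 = 0.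
Proof. intros H S. ext_entry H i2 i2. ext_entry H i2 i3. pose proof (S i2 i3). split; lra. Qed.
Lemma fwv_R1 q : mvec R1m q = q -> q i2 = 0 /\ q i3 = 0.
Proof. intro H. assert (E2 := f_equal (fun v => v i2) H). assert (E3 := f_equal (fun v => v i3) H).
  unfold mvec, sum3, R1m, mk3 in E2, E3; simpl in E2, E3. split; lra. Qed.
Lemma fwv_rot q : mvec Rt90 q = q -> q i2 = 0 /\ q i3 = 0.
Proof. intro H. assert (E2 := f_equal (fun v => v i2) H). assert (E3 := f_equal (fun v => v i3) H).
  unfold mvec, sum3, Rt90, mk3 in E2, E3; simpl in E2, E3. split; lra. Qed.

Lemma mk_diag A : (forall i j, A i j = A j i) -> A i1 i2 = 0 -> A i1 i3 = 0 -> A i2 i3 = 0 -> diagonal A.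
Proof. intros S H1 H2 H3 i j Hij. destruct i, j; try (exfalso; apply Hij; reflexivity);
  first [assumption | rewrite S; assumption]. Qed.

Lemma Qsym I f a : forall i j, Qmom I f a i j = Qmom I f a j i.
Proof. intros. unfold Qmom. f_equal. extensionality P. ring. Qed.
Lemma conjR_sym R Q : (forall k l, Q k l = Q l k) -> forall i j, conjR R Q i j = conjR R Q j i.
Proof. intros H i j. unfold conjR, mmul, tr, sum3. rewrite (H i2 i1), (H i3 i1), (H i3 i2). ring. Qed.

Lemma Dinfh_R2 : Dinfh R2m.
Proof. left. exists (-1), PI. split; [right; reflexivity|]. rewrite cos_PI, sin_PI. meq. Qed.
Lemma Dinfh_R3 : Dinfh R3m.
Proof. left. exists (-1), 0. split; [right; reflexivity|]. rewrite cos_0, sin_0. meq. Qed.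
Lemma Dinfh_rot : Dinfh Rt90.
Proof. left. exists 1, (PI/2). split; [left; reflexivity|]. rewrite cos_PI2, sin_PI2. unfold Rt90. meq. Qed.
Lemma Cinfv_R1 : Cinfv R1m.
Proof. left. exists PI. rewrite cos_PI, sin_PI. meq. Qed.
Lemma Cinfv_rot : Cinfv Rt90.
Proof. left. exists (PI/2). rewrite cos_PI2, sin_PI2. unfold Rt90. meq. Qed.
Lemma det_R1 : det R1m = 1. Proof. unfold det, R1m, mk3; simpl; ring. Qed.
Lemma det_R2 : det R2m = 1. Proof. unfold det, R2m, mk3; simpl; ring. Qed.
Lemma det_R3 : det R3m = 1. Proof. unfold det, R3m, mk3; simpl; ring. Qed.
Lemma det_rot : det Rt90 = 1. Proof. unfold det, Rt90, mk3; simpl; ring. Qed.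
Lemma det_J3 : det J3m = -1. Proof. unfold det, J3m, mk3; simpl; ring. Qed.

Theorem lemma1 (I : (M3 -> R) -> R) (HI : haar I) (R0 : M3) (HR : SO3 R0) :
  (forall (c2 : R) (f : M3 -> R), critical I (ker_Dinfh c2) f ->
     (sub_conj Dinfh (Jf Dinfh f) R0 <->
      diagonal (conjR R0 (Q1 I f)) /\
      conjR R0 (Q1 I f) i2 i2 = conjR R0 (Q1 I f) i3 i3)) /\
  (forall (c1 c2 : R) (f : M3 -> R), critical I (ker_Cinfv c1 c2) f ->
     (sub_conj Cinfv (Jf Cinfv f) R0 <->
      (diagonal (conjR R0 (Q1 I f)) /\
       conjR R0 (Q1 I f) i2 i2 = conjR R0 (Q1 I f) i3 i3) /\
      mvec R0 (pmom I f) i2 = 0 /\ mvec R0 (pmom I f) i3 = 0)) /\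
  (forall (c2 c3 c4 : R) (f : M3 -> R), critical I (ker_D2h c2 c3 c4) f ->
     (sub_conj D2h (Jf D2h f) R0 <->
      diagonal (conjR R0 (Q1 I f)) /\ diagonal (conjR R0 (Q2 I f)))) /\
  (forall (c1 c2 c3 c4 : R) (f : M3 -> R), critical I (ker_C2v c1 c2 c3 c4) f ->
     (sub_conj C2v (Jf C2v f) R0 <->
      (diagonal (conjR R0 (Q1 I f)) /\ diagonal (conjR R0 (Q2 I f))) /\
      mvec R0 (pmom I f) i2 = 0 /\ mvec R0 (pmom I f) i3 = 0)).
Proof.
  assert (S1 : forall f, forall i j, conjR R0 (Q1 I f) i j = conjR R0 (Q1 I f) j i)
    by (intro f; apply conjR_sym, Qsym).
  assert (S2 : forall f, forall i j, conjR R0 (Q2 I f) i j = conjR R0 (Q2 I f) j i)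
    by (intro f; apply conjR_sym, Qsym).
  split; [|split; [|split]].
  -
    intros c2 f Hc.
    assert (Hc' : critical I (ker_C2v 0 c2 0 0) f).
    { replace (ker_C2v 0 c2 0 0) with (ker_Dinfh c2); auto.
      extensionality P; extensionality P'. unfold ker_C2v, ker_Dinfh. ring. }
    assert (Hf : contSO3 f) by apply Hc.
    split.
    + intro Hs.
      destruct (fwd_rot I HI _ f R0 R2m HR Hf Hs Dinfh_R2 det_R2) as [A2 _].
      destruct (fwd_rot I HI _ f R0 R3m HR Hf Hs Dinfh_R3 det_R3) as [A3 _].
      destruct (fwd_rot I HI _ f R0 Rt90 HR Hf Hs Dinfh_rot det_rot) as [A4 _].
      destruct (fw_R2 _ A2 (S1 f)). destruct (fw_R3 _ A3 (S1 f)). destruct (fw_rot _ A4 (S1 f)).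
      split; auto. apply mk_diag; auto.
    + intros [Hd He].
      apply (back_gen I HI Dinfh 0 c2 0 0 f R0); auto.
      * intros T HT. apply Dinfh_facts; auto.
      * intros T HT. rewrite (diagA _ Hd), He. apply Dinfh_facts; auto.
      * intros J HJ. apply Dinfh_facts; auto.
  -
    intros c1 c2 f Hc.
    assert (Hc' : critical I (ker_C2v c1 c2 0 0) f).
    { replace (ker_C2v c1 c2 0 0) with (ker_Cinfv c1 c2); auto.
      extensionality P; extensionality P'. unfold ker_C2v, ker_Cinfv. ring. }
    assert (Hf : contSO3 f) by apply Hc.
    split.
    + intro Hs.
      destruct (fwd_rot I HI _ f R0 R1m HR Hf Hs Cinfv_R1 det_R1) as [A1 [_ V1]].
      destruct (fwd_rot I HI _ f R0 Rt90 HR Hf Hs Cinfv_rot det_rot) as [A4 [_ V4]].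
      destruct (fw_R1 _ A1 (S1 f)). destruct (fw_rot _ A4 (S1 f)).
      destruct (fwv_R1 _ V1).
      split; [split|split]; auto. apply mk_diag; auto.
    + intros [[Hd He] [Hq2 Hq3]].
      apply (back_gen I HI Cinfv c1 c2 0 0 f R0); auto.
      * intros T HT. apply Dinfh_facts, Cinfv_facts; auto.
      * intros T HT. rewrite (diagA _ Hd), He. apply Dinfh_facts, Cinfv_facts; auto.
      * right. split.
        -- intros T HT. apply Cinfv_facts; auto.
        -- intros J HJ. apply Cinfv_facts; auto.
      * intros J HJ. apply Dinfh_facts, Cinfv_facts; auto.
  -
    intros c2 c3 c4 f Hc.
    assert (Hc' : critical I (ker_C2v 0 c2 c3 c4) f).
    { replace (ker_C2v 0 c2 c3 c4) with (ker_D2h c2 c3 c4); auto.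
      extensionality P; extensionality P'. unfold ker_C2v, ker_D2h. ring. }
    assert (Hf : contSO3 f) by apply Hc.
    assert (D2h_R1 : D2h R1m) by (left; right; left; reflexivity).
    assert (D2h_R2 : D2h R2m) by (left; right; right; left; reflexivity).
    split.
    + intro Hs.
      destruct (fwd_rot I HI _ f R0 R1m HR Hf Hs D2h_R1 det_R1) as [A1 [B1 _]].
      destruct (fwd_rot I HI _ f R0 R2m HR Hf Hs D2h_R2 det_R2) as [A2 [B2 _]].
      destruct (fw_R1 _ A1 (S1 f)). destruct (fw_R2 _ A2 (S1 f)).
      destruct (fw_R1 _ B1 (S2 f)). destruct (fw_R2 _ B2 (S2 f)).
      split; apply mk_diag; auto.
    + intros [Hd1 Hd2].
      apply (back_gen I HI D2h 0 c2 c3 c4 f R0); auto.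
      * intros T HT. destruct (D2h_form T HT) as [d1 [d2 [d3 [E1 [E2 [E3 ->]]]]]].
        apply dg_orth; auto.
      * intros T HT. destruct (D2h_form T HT) as [d1 [d2 [d3 [E1 [E2 [E3 ->]]]]]].
        rewrite (diagA _ Hd1). apply dg_conj; auto.
      * right. split.
        -- intros T HT. destruct (D2h_form T HT) as [d1 [d2 [d3 [E1 [E2 [E3 ->]]]]]].
           rewrite (diagA _ Hd2). apply dg_conj; auto.
        -- intros J HJ. destruct (D2h_form J HJ) as [d1 [d2 [d3 [E1 [E2 [E3 ->]]]]]].
           exists d2. split; auto. intro k. apply dg_col2.
      * intros J HJ. destruct (D2h_form J HJ) as [d1 [d2 [d3 [E1 [E2 [E3 ->]]]]]].
        exists d1. split; auto. intro k. apply dg_col1.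
  -
    intros c1 c2 c3 c4 f Hc.
    assert (Hf : contSO3 f) by apply Hc.
    assert (C2v_R1 : C2v R1m) by (left; right; reflexivity).
    assert (C2v_J3 : C2v J3m) by (right; exists Id3; split; [left; reflexivity|meq]).
    split.
    + intro Hs.
      destruct (fwd_rot I HI _ f R0 R1m HR Hf Hs C2v_R1 det_R1) as [A1 [B1 V1]].
      destruct (fwd_refl I HI _ f R0 J3m HR Hf Hs C2v_J3 det_J3 C2v_J3) as [A2 B2].
      destruct (fw_R1 _ A1 (S1 f)). destruct (fw_J3 _ A2 (S1 f)).
      destruct (fw_R1 _ B1 (S2 f)). destruct (fw_J3 _ B2 (S2 f)).
      destruct (fwv_R1 _ V1).
      split; [split|split]; auto; apply mk_diag; auto.
    + intros [[Hd1 Hd2] [Hq2 Hq3]].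
      apply (back_gen I HI C2v c1 c2 c3 c4 f R0); auto.
      * intros T HT. destruct (C2v_form T HT) as [d2 [d3 [E2 [E3 ->]]]].
        apply dg_orth; auto; ring.
      * intros T HT. destruct (C2v_form T HT) as [d2 [d3 [E2 [E3 ->]]]].
        rewrite (diagA _ Hd1). apply dg_conj; auto; ring.
      * right. split.
        -- intros T HT. destruct (C2v_form T HT) as [d2 [d3 [E2 [E3 ->]]]].
           apply dg_vec; auto.
        -- intros J HJ. destruct (C2v_form J HJ) as [d2 [d3 [E2 [E3 ->]]]].
           intro k. apply dg_col1.
      * right. split.
        -- intros T HT. destruct (C2v_form T HT) as [d2 [d3 [E2 [E3 ->]]]].
           rewrite (diagA _ Hd2). apply dg_conj; auto; ring.
        -- intros J HJ. destruct (C2v_form J HJ) as [d2 [d3 [E2 [E3 ->]]]].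
           exists d2. split; auto. intro k. apply dg_col2.
      * intros J HJ. destruct (C2v_form J HJ) as [d2 [d3 [E2 [E3 ->]]]].
        exists 1. split; [ring|]. intro k. apply dg_col1.
Qed.
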